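(* Let $A\in\mathbb{R}^{n\times n}$, ${\mathbf w}\in\mathbb{R}^n$, $T>0$, and let $D$ be a linear differential operator in the time variable $t$ (for instance $\frac{\mathrm d}{\mathrm dt}$ or $\frac{\mathrm d^2}{\mathrm dt^2}$), acting componentwise on vector-valued functions. Let $\mathcal{V}_1\subseteq\mathcal{V}_2\subseteq\dots\subseteq\mathcal{V}_m\subseteq\mathcal{V}_{m+1}\subseteq\mathbb{R}^n$ be nested subspaces with $d_i=\dim(\mathcal{V}_i)$ (and $d_0=0$), such that ${\mathbf w}\in\mathcal{V}_1$ and $A\mathcal{V}_i\subseteq\mathcal{V}_{i+1}$ for all $i=1,\dots,m$. Let $\langle\cdot,\cdot\rangle_\ast$ be an inner product on $\mathcal{V}_{m+1}$, and let $U_{m+1}=[\mathcal{U}_1,\dots,\mathcal{U}_{m+1}]$, with $\mathcal{U}_j\in\mathbb{R}^{n\times b_j}$, $b_j=d_j-d_{j-1}$, be a nested basis of $\mathcal{V}_{m+1}$ that is orthonormal with respect to $\langle\cdot,\cdot\rangle_\ast$, i.e. $U_i=[\mathcal{U}_1,\dots,\mathcal{U}_i]$ has columns forming a $\langle\cdot,\cdot\rangle_\ast$-orthonormal basis of $\mathcal{V}_i$ for each $i\le m+1$. Let ${\mathbf y}_m:[0,T]\to\mathcal{V}_m$ be a (sufficiently differentiable) function whose residual \[ {\mathbf r}_m(t) := -D{\mathbf y}_m(t) - A{\mathbf y}_m(t) + {\mathbf w} \] satisfies the Galerkin condition $\langle {\mathbf v},{\mathbf r}_m(t)\rangle_\ast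 = 0$ for all ${\mathbf v}\in\mathcal{V}_m$ and all $t\in[0,T]$. Write ${\mathbf y}_m(t)=U_m{\mathbf x}_m(t)$ with ${\mathbf x}_m:[0,T]\to\mathbb{R}^{d_m}$. Then for all $t\in[0,T]$, \[ {\mathbf r}_m(t) = \mathcal{U}_{m+1}\boldsymbol{\beta}_m(t)\quad\text{with}\quad \boldsymbol{\beta}_m(t) = -\,\mathcal{U}_{m+1}^\ast A\,\mathcal{U}_m\,[{\mathbf x}_m(t)]_{d_{m-1}+1:d_m}. \]
   Context: For a matrix $W=[{\mathbf w}_1,\dots,{\mathbf w}_k]$ whose columns lie in $\mathcal{V}_{m+1}$, the adjoint $W^\ast$ with respect to $\langle\cdot,\cdot\rangle_\ast$ is the map sending ${\mathbf x}\in\mathcal{V}_{m+1}$ to the vector $(\langle{\mathbf w}_1,{\mathbf x}\rangle_\ast,\dots,\langle{\mathbf w}_k,{\mathbf x}\rangle_\ast)^{\top}\in\mathbb{R}^k$; thus $\mathcal{U}_{m+1}^\ast A\,\mathcal{U}_m$ is the $b_{m+1}\times b_m$ matrix with entries $\langle {\mathbf u}, A{\mathbf u}'\rangle_\ast$ for columns ${\mathbf u}$ of $\mathcal{U}_{m+1}$ and ${\mathbf u}'$ of $\mathcal{U}_m$ (well defined since $A\mathcal{V}_m\subseteq\mathcal{V}_{m+1}$). For a vector ${\mathbf v}$, $[{\mathbf v}]_{i:j}$ denotes the subvector of entries $i,i+1,\dots,j$. *)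

(* Defs.v *)
From HB Require Import structures.
From mathcomp Require Import all_boot all_order all_algebra.
Set Implicit Arguments. Unset Strict Implicit. Unset Printing Implicit Defensive.
Import Order.TTheory GRing.Theory Num.Theory.
Local Open Scope ring_scope.

Definition dimseq (R : fieldType) (n : nat) (V : nat -> {vspace 'cV[R]_n}) (i : nat)
  : nat := if i is 0 then 0%N else \dim (V i).

Definition compD (R : ringType) (n : nat) (D : (R -> R) -> (R -> R))
  (y : R -> 'cV[R]_n) : R -> 'cV[R]_n :=
  fun t => \col_i D (fun s => y s i 0) t.

(* Main.v *)
Require Import Defs.
From HB Require Import structures.
From mathcomp Require Import all_boot all_order all_algebra.
From Stdlib Require Import FunctionalExtensionality.
From mathcomp Require Import zify.
Import Order.TTheory GRing.Theory Num.Theory.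
Local Open Scope ring_scope.

Section H.
Variables (R : realFieldType) (n : nat) (W : {vspace 'cV[R]_n})
  (ip : 'cV[R]_n -> 'cV[R]_n -> R).
Hypothesis ipl : forall (a : R) v1 v2 z, v1 \in W -> v2 \in W -> z \in W ->
     ip (a *: v1 + v2) z = a * ip v1 z + ip v2 z.
Hypothesis ips : forall v1 v2, v1 \in W -> v2 \in W -> ip v1 v2 = ip v2 v1.

Lemma ip0l z : z \in W -> ip 0 z = 0.
Proof.
move=> zW; have := @ipl 1 0 0 z (mem0v W) (mem0v W) zW.
rewrite scale1r addr0 mul1r => /eqP; rewrite -subr_eq0 opprD addrA subrr add0r oppr_eq0 => /eqP.
exact.
Qed.

Lemma ipsuml (I : Type) (r : seq I) (c : I -> R) (f : I -> 'cV[R]_n) z :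
  (forall k, f k \in W) -> z \in W ->
  ip (\sum_(k <- r) c k *: f k) z = \sum_(k <- r) c k * ip (f k) z.
Proof.
move=> fW zW; elim: r => [|a r IH]; first by rewrite !big_nil ip0l.
rewrite !big_cons ipl ?IH //; apply: rpred_sum => k _; exact: memvZ.
Qed.

Lemma ipsumr (I : Type) (r : seq I) (c : I -> R) (f : I -> 'cV[R]_n) z :
  (forall k, f k \in W) -> z \in W ->
  ip z (\sum_(k <- r) c k *: f k) = \sum_(k <- r) c k * ip z (f k).
Proof.
move=> fW zW; rewrite ips ?ipsuml //; last by apply: rpred_sum => k _; exact: memvZ.
by apply: eq_bigr => k _; rewrite ips.
Qed.

Lemma iplr (a : R) v1 v2 z : v1 \in W -> v2 \in W -> z \in W ->
     ip z (a *: v1 + v2) = a * ip z v1 + ip z v2.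
Proof.
move=> h1 h2 h3; have h4 : a *: v1 + v2 \in W by rewrite rpredD // memvZ.
by rewrite (ips _ _ h3 h4) ipl // (ips _ _ h1) // (ips _ _ h2).
Qed.
End H.

Lemma span_iota (R : fieldType) n (u : nat -> 'cV[R]_n) N v :
  v \in <<[seq u k | k <- iota 0 N]>>%VS ->
  exists c : nat -> R, v = \sum_(k < N) c k *: u k.
Proof.
set s := [seq u k | k <- iota 0 N].
move=> /(@coord_span _ _ _ (in_tuple s)) ->.
have hs : size s = N by rewrite size_map size_iota.
have Hg : forall F : nat -> 'cV[R]_n, \sum_(i < size s) F i = \sum_(i < N) F i.
  by move=> F; rewrite hs.
pose c := fun k => (if @insub _ (fun k => k < size s)%N 'I_(size s) k is Some i then coord (in_tuple s) i v else 0).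
exists c.
rewrite -(Hg (fun k => c k *: u k)); apply: eq_bigr => i _ /=; rewrite /c valK; congr (_ *: _).
rewrite /s (nth_map 0%N) ?size_iota -?hs //.
  by rewrite nth_iota //; have := ltn_ord i; rewrite {2}hs.
by have := ltn_ord i; rewrite {2}hs.
Qed.

Lemma D_sum (R : comRingType) (D : (R -> R) -> (R -> R)) (S : pred (R -> R)) :
  S (fun _ => 0) -> D (fun _ => 0) = (fun _ => 0) ->
  (forall (a : R) f g, S f -> S g ->
     S (fun s => a * f s + g s) /\
     D (fun s => a * f s + g s) = (fun t => a * D f t + D g t)) ->
  forall (I : Type) (r : seq I) (f : I -> R -> R) (c : I -> R),
  (forall k, S (f k)) ->
  S (fun s => \sum_(k <- r) f k s * c k) /\
  D (fun s => \sum_(k <- r) f k s * c k) = (fun t => \sum_(k <- r) D (f k) t * c k).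
Proof.
move=> HS0 HD0 Hlin I r f c Hf; elim: r => [|a r [IH1 IH2]].
  have -> : (fun s => \sum_(k <- [::]) f k s * c k) = (fun _ => 0).
    by apply: functional_extensionality => s; rewrite big_nil.
  split=> //; rewrite HD0; apply: functional_extensionality => s; by rewrite big_nil.
have -> : (fun s => \sum_(k <- a :: r) f k s * c k) =
          (fun s => c a * f a s + (fun s => \sum_(k <- r) f k s * c k) s).
  by apply: functional_extensionality => s /=; rewrite big_cons mulrC.
have [H1 H2] := Hlin (c a) _ _ (Hf a) IH1.
split=> //; rewrite H2 IH2; apply: functional_extensionality => s.
by rewrite big_cons mulrC.
Qed.

Theorem theorem3p1 (R : realFieldType) (n m : nat) (A : 'M[R]_n) (w : 'cV[R]_n)
  (T : R) (D : (R -> R) -> (R -> R)) (S : pred (R -> R))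
  (V : nat -> {vspace 'cV[R]_n}) (ip : 'cV[R]_n -> 'cV[R]_n -> R)
  (u : nat -> 'cV[R]_n) (x : R -> nat -> R) :
  0 < T -> (0 < m)%N ->
  (* D is a linear operator on the class S of sufficiently smooth scalar functions *)
  S (fun _ => 0) -> D (fun _ => 0) = (fun _ => 0) ->
  (forall (a : R) f g, S f -> S g ->
     S (fun s => a * f s + g s) /\
     D (fun s => a * f s + g s) = (fun t => a * D f t + D g t)) ->
  (* nested subspaces *)
  w \in V 1 ->
  (forall i, (1 <= i <= m)%N -> (V i <= V i.+1)%VS) ->
  (forall i, (1 <= i <= m)%N -> forall v, v \in V i -> A *m v \in V i.+1) ->
  (* <.,.>_* is an inner product on V_{m+1} *)
  (forall (a : R) v1 v2 z, v1 \in V m.+1 -> v2 \in V m.+1 -> z \in V m.+1 ->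
     ip (a *: v1 + v2) z = a * ip v1 z + ip v2 z) ->
  (forall v1 v2, v1 \in V m.+1 -> v2 \in V m.+1 -> ip v1 v2 = ip v2 v1) ->
  (forall v, v \in V m.+1 -> v != 0 -> 0 < ip v v) ->
  (* nested <.,.>_*-orthonormal basis u_0, ..., u_{d_{m+1}-1} *)
  (forall k l, (k < dimseq V m.+1)%N -> (l < dimseq V m.+1)%N ->
     ip (u k) (u l) = (k == l)%:R) ->
  (forall i, (1 <= i <= m.+1)%N ->
     (<<[seq u k | k <- iota 0 (dimseq V i)]>>%VS = V i)) ->
  (* coordinates x_m of y_m, sufficiently smooth *)
  (forall k, (k < dimseq V m)%N -> S (fun t => x t k)) ->
  let y := fun t => \sum_(k < dimseq V m) x t k *: u k in
  let r := fun t => - compD D y t - A *m y t + w in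
  (* Galerkin condition *)
  (forall t, 0 <= t <= T -> forall v, v \in V m -> ip v (r t) = 0) ->
  forall t, 0 <= t <= T ->
    r t = \sum_(dimseq V m <= j < dimseq V m.+1)
            (- \sum_(dimseq V m.-1 <= k < dimseq V m)
                 ip (u j) (A *m u k) * x t k) *: u j.
Proof.
move=> HT Hm HS0 HD0 HDlin Hw Hnest HA Hipl Hips Hpos Horth Hspan HSx y r Hgal t Ht.
set W := V m.+1.
have uin : forall i k, (1 <= i <= m.+1)%N -> (k < dimseq V i)%N -> u k \in V i.
  move=> i k Hi Hk; rewrite -(Hspan i Hi); apply: memv_span; apply/mapP.
  by exists k; rewrite // mem_iota.
have HmW : forall v, v \in V m -> v \in W.
  by apply/subvP; apply: Hnest; rewrite Hm leqnn.
have H1m : forall i, (1 <= i <= m)%N -> (V 1 <= V i)%VS.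
  elim=> [|i IH] //; case: i IH => [|i] IH Hi; first exact: subvv.
  apply: subv_trans (IH _) (Hnest _ _) => //; move: Hi; clear; lia.
have hdle : (dimseq V m <= dimseq V m.+1)%N.
  by case: m Hm Hnest {HmW H1m uin y r Hgal Hspan Horth HSx HA Hipl Hips Hpos W} => // m' _ Hn; apply: dimvS; apply: Hn; clear; lia.
have orth : forall j, (dimseq V m <= j < dimseq V m.+1)%N -> forall v, v \in V m -> ip (u j) v = 0.
  move=> j Hj12; have /andP[Hj1 Hj2] := Hj12; move=> v; rewrite -(Hspan m) ?Hm ?leqnSn //.
  case/span_iota=> c ->.
  rewrite (@ipsumr R n W ip Hipl Hips _ _ (fun k : 'I_(dimseq V m) => c k) (fun k : 'I_(dimseq V m) => u k)).
  - apply: big1 => k _; rewrite Horth //; last by apply: leq_trans (ltn_ord k) hdle.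
    by rewrite (_ : (j == k) = false) ?mulr0 //; apply/negbTE; rewrite neq_ltn (leq_trans (ltn_ord k) Hj1) orbT.
  - by move=> k; apply: HmW; apply: uin; [by rewrite Hm leqnSn | exact: ltn_ord].
  - by rewrite /W; apply: uin; [by rewrite ltnS leqnn | exact: Hj2].
have yin : forall s, y s \in V m.
  move=> s; apply: rpred_sum => k _; apply: memvZ; apply: uin; [by rewrite Hm leqnSn | exact: ltn_ord].
have HDy : compD D y t = \sum_(k < dimseq V m) D (fun s => x s k) t *: u k.
  apply/matrixP => i j; rewrite (ord1 j) /compD !mxE summxE.
  have -> : (fun s => y s i 0) = (fun s => \sum_(k < dimseq V m) (fun s => x s k) s * u k i 0).
    by apply: functional_extensionality => s; rewrite /y summxE; apply: eq_bigr => k _; rewrite mxE.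
  have [_ ->] := D_sum R D S HS0 HD0 HDlin _ (index_enum 'I_(dimseq V m)) (fun k : 'I_(dimseq V m) => fun s => x s k) (fun k => u k i 0) (fun k => HSx k (ltn_ord k)).
  by apply: eq_bigr => k _; rewrite mxE.
have Dyin : compD D y t \in V m.
  rewrite HDy; apply: rpred_sum => k _; apply: memvZ; apply: uin; [by rewrite Hm leqnSn | exact: ltn_ord].
have win : w \in V m.
  by move: Hw; apply/subvP; apply: H1m; rewrite Hm leqnn.
have Ayin : A *m y t \in W by apply: HA => //; rewrite Hm leqnn.
have rin : r t \in W.
  rewrite /r; apply: rpredD; last exact: HmW.
  by apply: rpredB => //; rewrite rpredN; exact: HmW.
have rexp : r t = \sum_(k < dimseq V m.+1) ip (u k) (r t) *: u k.
  move: (rin); rewrite /W -(Hspan m.+1) ?leqnn //; case/span_iota=> c Hc.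
  rewrite {1}Hc; apply: eq_bigr => k _; congr (_ *: _).
  rewrite Hc (@ipsumr R n W ip Hipl Hips _ _ (fun k : 'I_(dimseq V m.+1) => c k) (fun k : 'I_(dimseq V m.+1) => u k)).
  - rewrite (bigD1 k) //= big1 ?addr0; first by rewrite Horth // eqxx mulr1.
    by move=> l Hl; rewrite Horth // (_ : (k == l :> nat) = false) ?mulr0 //; apply/negbTE; rewrite eq_sym; exact: Hl.
  - by move=> l; apply: uin; [by rewrite ltnS leqnn | exact: ltn_ord].
  - by apply: uin; [by rewrite ltnS leqnn | exact: ltn_ord].
rewrite rexp -(big_mkord xpredT (fun k => ip (u k) (r t) *: u k)).
rewrite (big_cat_nat (leq0n _) hdle) /= big1_seq ?add0r; last first.
  move=> k /andP[_]; rewrite mem_index_iota => /andP[_ Hk].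
  by rewrite Hgal ?scale0r //; apply: uin; [rewrite Hm leqnSn | ].
apply: eq_big_nat => j Hj; congr (_ *: _).
have -> : r t = (-1) *: compD D y t + ((-1) *: (A *m y t) + w) by rewrite /r !scaleN1r addrA.
have ujW : u j \in W by rewrite /W; apply: uin; [rewrite ltnS leqnn | case/andP: Hj].
have DyW := HmW _ Dyin; have wW := HmW _ win.
rewrite (@iplr R n W ip Hipl Hips) //; last by rewrite rpredD ?memvZ.
rewrite (@iplr R n W ip Hipl Hips) //.
rewrite (orth j Hj _ Dyin) (orth j Hj _ win) mulr0 add0r addr0 mulN1r; congr (- _).
have -> : A *m y t = \sum_(k < dimseq V m) x t k *: (A *m u k).
  by rewrite /y mulmx_sumr; apply: eq_bigr => k _; rewrite scalemxAr.
rewrite (@ipsumr R n W ip Hipl Hips _ _ (fun k : 'I_(dimseq V m) => x t k) (fun k : 'I_(dimseq V m) => A *m u k)) //; last first.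
  by move=> k; apply: HA; [rewrite Hm leqnn | apply: uin; [by rewrite Hm leqnSn | exact: ltn_ord]].
rewrite -(big_mkord xpredT (fun k => x t k * ip (u j) (A *m u k))).
have hd1 : (dimseq V m.-1 <= dimseq V m)%N.
  case E: m.-1 => [|m'] //=.
  have Em : m = m'.+2 by clear -E; lia.
  rewrite Em /=; apply: dimvS; apply: Hnest; clear -E; lia.
rewrite (big_cat_nat (leq0n _) hd1) /= big1_seq ?add0r; last first.
  move=> k /andP[_]; rewrite mem_index_iota => /andP[_ Hk].
  move: Hk; case E: m.-1 => [|m'] //= Hk.
  have Em : m = m'.+2 by clear -E; lia.
  rewrite orth ?mulr0 //; rewrite Em; apply: HA; first by clear -E; lia.
  by apply: uin; [clear -E; lia | exact: Hk].
by apply: eq_big_nat => k _; rewrite mulrC.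
Qed.
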